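(* Let $A$ satisfy the spectral assumption, let $P_1=Q_1\in\mathbb{R}^{n\times k}$ have orthonormal columns spanning $E_{\mathrm u}$, and suppose $E_{\mathrm u}^\perp$ and $E_{\mathrm s}$ are $\xi$-close for some $\xi\in(0,1)$. Then one can choose $P_2\in\mathbb{R}^{n\times(n-k)}$ with orthonormal columns spanning $E_{\mathrm u}^\perp$ and $Q_2\in\mathbb{R}^{n\times(n-k)}$ with orthonormal columns spanning $E_{\mathrm s}$ such that, with the notation below, (1) $\sigma_{\min}(P_2^\top Q_2)\ge 1-\xi$, $\|P_1^\top Q_2\|\le\sqrt{2\xi}$, $\|P_2-Q_2\|\le\sqrt{2\xi}$; (2) $\|R_2\|\le\frac{1}{1-\xi}$ and $\|N_2\|\le\frac{1}{1-\xi}\|A\|$; (3) $\|P_1^\top-R_1\|\le\frac{\sqrt{2\xi}}{1-\xi}$ and $\|R_1\|\le 1+\frac{\sqrt{2\xi}}{1-\xi}$; (4) $\|\Delta\|\le\frac{2-\xi}{1-\xi}\sqrt{2\xi}\,\|A\|$.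
   Context: Spectral assumption: $A\in\mathbb{R}^{n\times n}$ is diagonalizable with eigenvalues $|\lambda_1|>|\lambda_2|\ge\cdots\ge|\lambda_k|>1>|\lambda_{k+1}|\ge\cdots\ge|\lambda_n|$. $E_{\mathrm u}$ (resp. $E_{\mathrm s}$) is the real $A$-invariant subspace spanned by the real eigenvectors and the real and imaginary parts of complex eigenvectors associated with $\lambda_1,\dots,\lambda_k$ (resp. $\lambda_{k+1},\dots,\lambda_n$); $\mathbb{R}^n=E_{\mathrm u}\oplus E_{\mathrm s}$. Given orthonormal-column matrices $P_1$ (basis of $E_{\mathrm u}$), $P_2$ (basis of $E_{\mathrm u}^\perp$), $P=[P_1\ P_2]$, define $M=P^\top AP=\begin{bmatrix}M_1&\Delta\\0&M_2\end{bmatrix}$. With $Q_1=P_1$, $Q_2$ an orthonormal basis of $E_{\mathrm s}$, $Q=[Q_1\ Q_2]$, write $Q^{-1}=\begin{bmatrix}R_1\\R_2\end{bmatrix}$ ($R_1\in\mathbb{R}^{k\times n}$), so that $Q^{-1}AQ=\mathrm{diag}(N_1,N_2)$ with $N_1=M_1$. Definition ($\xi$-close): for $\xi\in(0,1]$, $E_{\mathrm u}^\perp=\mathrm{col}(P_2)$ and $E_{\mathrm s}=\mathrm{col}(Q_2)$ are $\xi$-close iff $\sigma_{\min}(P_2^\top Q_2)>1-\xi$ (independent of the choice of orthonormal bases). $\|\cdot\|$ is the spectral norm. *)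

(* Defs.v *)
From HB Require Import structures.
From mathcomp Require Import all_boot all_order all_algebra.
From mathcomp Require Import all_classical all_reals.
From mathcomp Require Import complex.

Set Implicit Arguments.
Unset Strict Implicit.
Unset Printing Implicit Defensive.
Import Order.TTheory GRing.Theory Num.Theory.
Local Open Scope ring_scope.
Local Open Scope classical_set_scope.

Section Defs.
Variable R : realType.

Notation C := (complex.complex R).

Definition cmod (z : C) : R :=
  Num.sqrt (complex.Re z ^+ 2 + complex.Im z ^+ 2).

Definition cplx_mx p q (A : 'M[R]_(p, q)) : 'M[C]_(p, q) :=
  map_mx (fun r => complex.Complex r 0) A.
Definition Re_mx p q (V : 'M[C]_(p, q)) : 'M[R]_(p, q) := map_mx (@complex.Re R) V.
Definition Im_mx p q (V : 'M[C]_(p, q)) : 'M[R]_(p, q) := map_mx (@complex.Im R) V.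

Definition vnorm n (x : 'cV[R]_n) : R := Num.sqrt (\sum_i x i 0 ^+ 2).

Definition opnorm p q (B : 'M[R]_(p, q)) : R :=
  sup [set vnorm (B *m x) | x in [set x : 'cV[R]_q | vnorm x = 1]].

Definition sigma_min p (B : 'M[R]_p) : R :=
  inf [set vnorm (B *m x) | x in [set x : 'cV[R]_p | vnorm x = 1]].

Definition orthonormal_cols p q (P : 'M[R]_(p, q)) : Prop := P^T *m P = 1%:M.

Definition in_span n (S : set 'cV[R]_n) (x : 'cV[R]_n) : Prop :=
  exists (s : seq 'cV[R]_n) (c : seq R),
    (forall v, v \in s -> S v) /\ x = \sum_(i < size s) c`_i *: s`_i.

Definition col_spans n q (P : 'M[R]_(n, q)) (E : set 'cV[R]_n) : Prop :=
  forall x : 'cV[R]_n, (exists y : 'cV[R]_q, x = P *m y) <-> E x.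

Definition orth_compl n (E : set 'cV[R]_n) : set 'cV[R]_n :=
  [set x | forall y, E y -> y^T *m x = 0].

Definition eig_real_span n (A : 'M[R]_n) (lam : 'I_n -> C) (I : pred 'I_n)
  : set 'cV[R]_n :=
  in_span [set w | exists (i : 'I_n) (v : 'cV[C]_n),
             [/\ I i, v != 0, cplx_mx A *m v = lam i *: v
               & (w = Re_mx v \/ w = Im_mx v)]].

(* spectral assumption: A diagonalizable (over C) with eigenvalues lam 0, ...,
   lam (n-1) (with multiplicity), ordered as
   |l_1| > |l_2| >= ... >= |l_k| > 1 > |l_{k+1}| >= ... >= |l_n| *)
Definition spectral_assumption n (k : nat) (A : 'M[R]_n) (lam : 'I_n -> C) : Prop :=
  (exists V : 'M[C]_n, V \in unitmx /\
      invmx V *m cplx_mx A *m V = diag_mx (\row_i lam i)) /\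
  (forall i j : 'I_n, (i < j)%N -> cmod (lam j) <= cmod (lam i)) /\
  (forall i j : 'I_n, nat_of_ord i = 0%N -> nat_of_ord j = 1%N ->
      cmod (lam j) < cmod (lam i)) /\
  (forall i : 'I_n, (i < k)%N -> 1 < cmod (lam i)) /\
  (forall i : 'I_n, (k <= i)%N -> cmod (lam i) < 1).

Definition E_u n k (A : 'M[R]_n) lam := eig_real_span A lam (fun i => (i < k)%N).
Definition E_s n k (A : 'M[R]_n) lam := eig_real_span A lam (fun i => (k <= i)%N).

Definition xi_close n m (xi : R) (U W : set 'cV[R]_n) : Prop :=
  exists (P2 Q2 : 'M[R]_(n, m)),
    [/\ orthonormal_cols P2, col_spans P2 U, orthonormal_cols Q2, col_spans Q2 W
      & 1 - xi < sigma_min (P2^T *m Q2)].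

End Defs.

(* Main.v *)
Require Import Defs.
From HB Require Import structures.
From mathcomp Require Import all_boot all_order all_algebra.
From mathcomp Require Import all_classical all_reals.
From mathcomp Require Import complex.
From mathcomp Require Import ring lra.
Set Implicit Arguments.
Unset Strict Implicit.
Unset Printing Implicit Defensive.
Import Order.TTheory GRing.Theory Num.Theory.
Local Open Scope ring_scope.


Section Norms.
Variable R : realType.

Definition dot n (u v : 'cV[R]_n) : R := ((trmx u) *m v) 0 0.

Lemma dotC n (u v : 'cV[R]_n) : dot u v = dot v u.
Proof.
rewrite /dot !mxE; apply: eq_bigr => i _; rewrite !mxE mulrC //.
Qed.

Lemma dotDl n (u v w : 'cV[R]_n) : dot (u + v) w = dot u w + dot v w.
Proof. by rewrite /dot linearD /= mulmxDl mxE. Qed.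

Lemma dotZl n a (u w : 'cV[R]_n) : dot (a *: u) w = a * dot u w.
Proof. by rewrite /dot linearZ /= -scalemxAl mxE. Qed.

Lemma dotDr n (u v w : 'cV[R]_n) : dot w (u + v) = dot w u + dot w v.
Proof. by rewrite dotC dotDl !(dotC w). Qed.

Lemma dotZr n a (u w : 'cV[R]_n) : dot w (a *: u) = a * dot w u.
Proof. by rewrite dotC dotZl dotC. Qed.

Lemma dotNl n (u w : 'cV[R]_n) : dot (- u) w = - dot u w.
Proof. by rewrite -scaleN1r dotZl mulN1r. Qed.

Lemma dotNr n (u w : 'cV[R]_n) : dot w (- u) = - dot w u.
Proof. by rewrite dotC dotNl dotC. Qed.

Lemma dotE n (u v : 'cV[R]_n) : dot u v = \sum_i u i 0 * v i 0.
Proof. by rewrite /dot mxE; apply: eq_bigr => i _; rewrite mxE. Qed.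

Lemma vnormE n (x : 'cV[R]_n) : vnorm x = Num.sqrt (dot x x).
Proof. by rewrite /vnorm dotE; congr Num.sqrt; apply: eq_bigr => i _; rewrite expr2. Qed.

Lemma dot_ge0 n (x : 'cV[R]_n) : 0 <= dot x x.
Proof. by rewrite dotE; apply: sumr_ge0 => i _; rewrite -expr2 sqr_ge0. Qed.

Lemma dot_eq0 n (x : 'cV[R]_n) : dot x x = 0 -> x = 0.
Proof.
rewrite dotE => /eqP; rewrite psumr_eq0; last by move=> i _; rewrite -expr2 sqr_ge0.
move=> /allP H; apply/matrixP => i j; rewrite ord1 mxE.
have := H i (mem_index_enum _); rewrite -expr2 sqrf_eq0 => /eqP //.
Qed.

Lemma vnorm_ge0 n (x : 'cV[R]_n) : 0 <= vnorm x.
Proof. by rewrite vnormE sqrtr_ge0. Qed.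

Lemma vnorm_sq n (x : 'cV[R]_n) : vnorm x ^+ 2 = dot x x.
Proof. by rewrite vnormE sqr_sqrtr // dot_ge0. Qed.

Lemma vnorm0 n : vnorm (0 : 'cV[R]_n) = 0.
Proof. by rewrite vnormE /dot mulmx0 mxE sqrtr0. Qed.

Lemma vnorm_eq0 n (x : 'cV[R]_n) : vnorm x = 0 -> x = 0.
Proof. by move=> h; apply: dot_eq0; rewrite -vnorm_sq h expr0n. Qed.

Lemma CS n (u v : 'cV[R]_n) : dot u v ^+ 2 <= dot u u * dot v v.
Proof.
have := dot_ge0 (dot v v *: u - dot u v *: v).
rewrite !dotDl !dotDr !dotNl !dotNr !dotZl !dotZr (dotC v u).
have hv := dot_ge0 v.
move: hv; rewrite le_eqVlt => /orP[/eqP v0|vp]; last first.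
  move=> H.
  have H2 : 0 <= dot v v * (dot u u * dot v v - dot u v ^+ 2) by nra.
  move: H2; rewrite pmulr_rge0 //; lra.
move: (dot_eq0 (esym v0)) => ->; rewrite /dot !mulmx0 !mxE expr2 !mulr0 => _ //.
Qed.

Lemma CS_abs n (u v : 'cV[R]_n) : `|dot u v| <= vnorm u * vnorm v.
Proof.
rewrite -sqrtr_sqr !vnormE -sqrtrM ?dot_ge0 // ler_sqrt; last by rewrite mulr_ge0 // dot_ge0.
exact: CS.
Qed.

Lemma vnormD n (u v : 'cV[R]_n) : vnorm (u + v) <= vnorm u + vnorm v.
Proof.
rewrite -(ger0_norm (addr_ge0 (vnorm_ge0 u) (vnorm_ge0 v))) -sqrtr_sqr.
rewrite [vnorm (u + v)]vnormE ler_sqrt ?sqr_ge0 //.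
rewrite dotDl !dotDr (dotC v u) sqrrD !vnorm_sq.
have := CS_abs u v; have := ler_norm (dot u v); lra.
Qed.

Lemma vnormZ n a (x : 'cV[R]_n) : vnorm (a *: x) = `|a| * vnorm x.
Proof. by rewrite !vnormE dotZl dotZr mulrA -expr2 sqrtrM ?sqr_ge0 // sqrtr_sqr. Qed.

Lemma vnormN n (x : 'cV[R]_n) : vnorm (- x) = vnorm x.
Proof. by rewrite -scaleN1r vnormZ normrN normr1 mul1r. Qed.

Lemma vnormB n (u v : 'cV[R]_n) : vnorm (u - v) <= vnorm u + vnorm v.
Proof. by rewrite -(vnormN v) vnormD. Qed.

End Norms.

Section Bnd.
Variable R : realType.
Local Open Scope classical_set_scope.

Lemma dot_mull p q (B : 'M[R]_(p, q)) x y : dot (B *m x) y = dot x (B^T *m y).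
Proof. by rewrite /dot trmx_mul mulmxA. Qed.

Definition bnd p q (B : 'M[R]_(p, q)) (c : R) := forall x, vnorm (B *m x) <= c * vnorm x.

Lemma bnd_mul p q r (B : 'M[R]_(p, q)) (C : 'M[R]_(q, r)) b c :
  0 <= b -> bnd B b -> bnd C c -> bnd (B *m C) (b * c).
Proof.
move=> b0 hB hC x; rewrite -mulmxA; apply: le_trans (hB _) _.
by rewrite -mulrA ler_wpM2l.
Qed.

Lemma bnd_add p q (B C : 'M[R]_(p, q)) b c : bnd B b -> bnd C c -> bnd (B + C) (b + c).
Proof.
move=> hB hC x; rewrite mulmxDl mulrDl; apply: le_trans (vnormD _ _) _.
exact: lerD.
Qed.

Lemma bnd_sub p q (B C : 'M[R]_(p, q)) b c : bnd B b -> bnd C c -> bnd (B - C) (b + c).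
Proof.
move=> hB hC x; rewrite mulmxBl mulrDl; apply: le_trans (vnormB _ _) _.
exact: lerD.
Qed.

Lemma bnd_le p q (B : 'M[R]_(p, q)) b c : b <= c -> bnd B b -> bnd B c.
Proof.
move=> bc hB x; apply: le_trans (hB x) _; by rewrite ler_wpM2r ?vnorm_ge0.
Qed.


Lemma bnd_tr p q (B : 'M[R]_(p, q)) c : 0 <= c -> bnd B c -> bnd B^T c.
Proof.
move=> c0 hB y.
have h : vnorm (B^T *m y) ^+ 2 <= vnorm y * (c * vnorm (B^T *m y)).
  rewrite vnorm_sq -dot_mull.
  apply: le_trans (ler_norm _) _; rewrite dotC; apply: le_trans (CS_abs _ _) _.
  by rewrite ler_wpM2l ?vnorm_ge0 ?hB.
have g1 := vnorm_ge0 (B^T *m y); have g2 := vnorm_ge0 y.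
move: g1; rewrite le_eqVlt => /orP[/eqP <-|gp]; first by rewrite mulr_ge0.
move: h; rewrite expr2 mulrA [X in _ <= X]mulrC ler_pM2l // => h2; by rewrite mulrC.
Qed.

Lemma orth_vnorm p q (Q : 'M[R]_(p, q)) x : Q^T *m Q = 1%:M -> vnorm (Q *m x) = vnorm x.
Proof. by move=> h; rewrite !vnormE dot_mull mulmxA h mul1mx. Qed.

Lemma bnd_orth p q (Q : 'M[R]_(p, q)) : Q^T *m Q = 1%:M -> bnd Q 1.
Proof. by move=> h x; rewrite orth_vnorm // mul1r. Qed.

Lemma bnd_orthT p q (Q : 'M[R]_(p, q)) : Q^T *m Q = 1%:M -> bnd Q^T 1.
Proof. by move=> h; apply: bnd_tr => //; apply: bnd_orth. Qed.

Lemma bnd_exists p q (B : 'M[R]_(p, q)) : exists c, bnd B c.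
Proof.
exists (Num.sqrt (\sum_i dot (row i B)^T (row i B)^T)) => x.
rewrite !vnormE -sqrtrM; last by apply: sumr_ge0 => i _; apply: dot_ge0.
rewrite ler_sqrt; last by apply: mulr_ge0; [apply: sumr_ge0 => i _; apply: dot_ge0| apply: dot_ge0].
rewrite [X in X <= _]dotE mulr_suml; apply: ler_sum => i _.
have -> : (B *m x) i 0 = dot (row i B)^T x.
  by rewrite /dot trmxK -row_mul !mxE.
by have := CS (row i B)^T x; rewrite expr2 [_ * dot x x]mulrC.
Qed.

Lemma opnorm_le p q (B : 'M[R]_(p, q)) c : 0 <= c -> bnd B c -> opnorm B <= c.
Proof.
move=> c0 hB; rewrite /opnorm.
set E := [set _ | _ in _].
have [[y Ey]|ne] := pselect (exists y, E y); last first.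
  have -> : E = set0 by apply/seteqP; split => y // Ey; apply: ne; exists y.
  by rewrite sup0.
apply: ge_sup; first by exists y.
move=> z [x /= x1 <-]; apply: le_trans (hB x) _; by rewrite x1 mulr1.
Qed.

Lemma bnd_opnorm p q (B : 'M[R]_(p, q)) : bnd B (opnorm B).
Proof.
have [c hc] := bnd_exists B.
have ub : has_ubound [set vnorm (B *m x) | x in [set x : 'cV[R]_q | vnorm x = 1]].
  by exists c => z [x /= x1 <-]; apply: le_trans (hc x) _; rewrite x1 mulr1.
move=> x; have [x0|nx0] := eqVneq (vnorm x) 0.
  by rewrite (vnorm_eq0 x0) mulmx0 !vnorm0 mulr0.
have xp : 0 < vnorm x by rewrite lt_neqAle eq_sym nx0 vnorm_ge0.
have : vnorm (B *m ((vnorm x)^-1 *: x)) <= opnorm B.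
  apply: ub_le_sup => //; exists ((vnorm x)^-1 *: x) => //=.
  by rewrite vnormZ ger0_norm ?invr_ge0 ?vnorm_ge0 // mulVf.
rewrite -scalemxAr vnormZ ger0_norm ?invr_ge0 ?vnorm_ge0 //.
by rewrite ler_pdivrMl // mulrC.
Qed.

Lemma opnorm_ge0 p q (B : 'M[R]_(p, q)) : 0 <= opnorm B.
Proof.
rewrite /opnorm; set E := [set _ | _ in _].
have [c hc] := bnd_exists B.
have ub : has_ubound E.
  by exists c => z [x /= x1 <-]; apply: le_trans (hc x) _; rewrite x1 mulr1.
have [[y Ey]|ne] := pselect (exists y, E y); last first.
  have -> : E = set0 by apply/seteqP; split => y // Ey; apply: ne; exists y.
  by rewrite sup0.
apply: le_trans (ub_le_sup ub Ey); case: Ey => x _ <-; exact: vnorm_ge0.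
Qed.

Lemma sigma_min_lb p (B : 'M[R]_p) x : sigma_min B * vnorm x <= vnorm (B *m x).
Proof.
have lb : has_lbound [set vnorm (B *m x) | x in [set x : 'cV[R]_p | vnorm x = 1]].
  by exists 0 => z [y _ <-]; apply: vnorm_ge0.
have [x0|nx0] := eqVneq (vnorm x) 0.
  by rewrite (vnorm_eq0 x0) mulmx0 !vnorm0 mulr0.
have xp : 0 < vnorm x by rewrite lt_neqAle eq_sym nx0 vnorm_ge0.
have : sigma_min B <= vnorm (B *m ((vnorm x)^-1 *: x)).
  apply: ge_inf => //; exists ((vnorm x)^-1 *: x) => //=.
  by rewrite vnormZ ger0_norm ?invr_ge0 ?vnorm_ge0 // mulVf.
rewrite -scalemxAr vnormZ ger0_norm ?invr_ge0 ?vnorm_ge0 //.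
by rewrite ler_pdivlMl // mulrC.
Qed.

End Bnd.

Section Cplx.
Variable R : realType.
Notation C := (complex.complex R).

Lemma ReMr (z : C) (r : R) : complex.Re (complex.Complex r 0 * z) = r * complex.Re z.
Proof. by case: z => a b /=; rewrite mul0r subr0. Qed.

Lemma ImMr (z : C) (r : R) : complex.Im (complex.Complex r 0 * z) = r * complex.Im z.
Proof. by case: z => a b /=; rewrite mul0r addr0. Qed.

Lemma ReM (l z : C) : complex.Re (l * z) = complex.Re l * complex.Re z - complex.Im l * complex.Im z.
Proof. by case: z => a b; case: l => c d. Qed.

Lemma ImM (l z : C) : complex.Im (l * z) = complex.Re l * complex.Im z + complex.Im l * complex.Re z.
Proof. by case: z => a b; case: l => c d /=; rewrite addrC. Qed.

Lemma ReD (a b : C) : complex.Re (a + b) = complex.Re a + complex.Re b.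
Proof. by case: a; case: b. Qed.

Lemma ImD (a b : C) : complex.Im (a + b) = complex.Im a + complex.Im b.
Proof. by case: a; case: b. Qed.

Lemma Re0 : complex.Re (0 : C) = 0. Proof. by []. Qed.
Lemma Im0 : complex.Im (0 : C) = 0. Proof. by []. Qed.

Lemma Re_sum I (r : seq I) (P : pred I) (F : I -> C) :
  complex.Re (\sum_(i <- r | P i) F i) = \sum_(i <- r | P i) complex.Re (F i).
Proof. by elim/big_rec2: _ => // i x y _ <-; rewrite ReD. Qed.

Lemma Im_sum I (r : seq I) (P : pred I) (F : I -> C) :
  complex.Im (\sum_(i <- r | P i) F i) = \sum_(i <- r | P i) complex.Im (F i).
Proof. by elim/big_rec2: _ => // i x y _ <-; rewrite ImD. Qed.

Lemma Re_mxM p q (A : 'M[R]_(p, q)) (v : 'cV[C]_q) :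
  Re_mx (cplx_mx A *m v) = A *m Re_mx v.
Proof.
apply/matrixP => i j; rewrite !mxE Re_sum; apply: eq_bigr => l _.
by rewrite !mxE ReMr.
Qed.

Lemma Im_mxM p q (A : 'M[R]_(p, q)) (v : 'cV[C]_q) :
  Im_mx (cplx_mx A *m v) = A *m Im_mx v.
Proof.
apply/matrixP => i j; rewrite !mxE Im_sum; apply: eq_bigr => l _.
by rewrite !mxE ImMr.
Qed.

Lemma Re_mxZ p q (l : C) (v : 'M[C]_(p, q)) :
  Re_mx (l *: v) = complex.Re l *: Re_mx v - complex.Im l *: Im_mx v.
Proof. by apply/matrixP => i j; rewrite !mxE ReM. Qed.

Lemma Im_mxZ p q (l : C) (v : 'M[C]_(p, q)) :
  Im_mx (l *: v) = complex.Im l *: Re_mx v + complex.Re l *: Im_mx v.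
Proof. by apply/matrixP => i j; rewrite !mxE ImM addrC. Qed.

Lemma ReIm_neq0 p q (v : 'M[C]_(p, q)) : v != 0 -> Re_mx v != 0 \/ Im_mx v != 0.
Proof.
move=> nv; case: (eqVneq (Re_mx v) 0) => hr; last by left.
case: (eqVneq (Im_mx v) 0) => hi; last by right.
exfalso; move/eqP: nv; apply; apply/matrixP => i j.
move/matrixP: hr => /(_ i j); move/matrixP: hi => /(_ i j); rewrite !mxE.
by case: (v i j) => a b /= -> ->.
Qed.

End Cplx.

Section Spec.
Variable R : realType.

Lemma dot_gt0 n (x : 'cV[R]_n) : x != 0 -> 0 < dot x x.
Proof.
move=> nx; rewrite lt_neqAle dot_ge0 andbT; apply/eqP => h.
by move/eqP: nx; apply; apply: dot_eq0.
Qed.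

Lemma normalize_eig n (G : 'M[R]_n) (x : 'cV[R]_n) l :
  x != 0 -> G *m x = l *: x -> exists u : 'cV[R]_n, exists l, dot u u = 1 /\ G *m u = l *: u.
Proof.
move=> nx hx; exists ((vnorm x)^-1 *: x), l; split.
  rewrite -vnorm_sq vnormZ ger0_norm ?invr_ge0 ?vnorm_ge0 // mulVf ?expr1n //.
  by rewrite vnormE sqrtr_eq0 -ltNge dot_gt0.
by rewrite -scalemxAr hx !scalerA mulrC.
Qed.

Lemma real_eigvec n (G : 'M[R]_n.+1) : G^T = G ->
  exists u : 'cV[R]_n.+1, exists l : R, dot u u = 1 /\ G *m u = l *: u.
Proof.
move=> sG.
have [a /eigenvalueP [v hv nv]] := eigenvalue_closed (cplx_mx G) (ltn0Sn n).
set w := v^T.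
have hw : cplx_mx G *m w = a *: w.
  have := congr1 trmx hv; rewrite trmx_mul linearZ /= /cplx_mx map_trmx sG //.
have nw : w != 0 by rewrite /w trmx_eq0.
set xr := Re_mx w; set xi := Im_mx w.
have hr : G *m xr = complex.Re a *: xr - complex.Im a *: xi by rewrite -Re_mxM hw Re_mxZ.
have hi : G *m xi = complex.Im a *: xr + complex.Re a *: xi by rewrite -Im_mxM hw Im_mxZ.
have key : dot xi (G *m xr) = dot (G *m xi) xr by rewrite dot_mull sG.
rewrite hr hi dotDl dotDr dotNr !dotZl !dotZr in key.
have k2 : complex.Im a * (dot xr xr + dot xi xi) = 0 by lra.
have hre : forall x : 'cV[R]_n.+1, x != 0 -> x = xr \/ x = xi -> complex.Im a = 0.
  move=> x nx hx; have := dot_gt0 nx; have := dot_ge0 xr; have := dot_ge0 xi.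
  case: hx => -> a1 a2 a3; move/eqP: k2; rewrite mulf_eq0 => /orP[/eqP //|/eqP h]; lra.
case: (ReIm_neq0 nw) => [nr|ni].
  apply: (normalize_eig nr (l := complex.Re a)).
  by rewrite hr (hre xr nr (or_introl erefl)) scale0r subr0.
apply: (normalize_eig ni (l := complex.Re a)).
by rewrite hi (hre xi ni (or_intror erefl)) scale0r add0r.
Qed.

End Spec.

Section Spec2.
Variable R : realType.

Lemma dot_e n (x : 'cV[R]_n.+1) : dot x (delta_mx 0 0) = x 0 0.
Proof.
rewrite dotE (bigD1 ord0) //= mxE !eqxx mulr1 big1 ?addr0 // => i ni.
by rewrite mxE (negbTE ni) mulr0.
Qed.

Lemma tt11 n (w v : 'cV[R]_n) : w^T *m v = (dot w v)%:M.
Proof. by rewrite [LHS]mx11_scalar. Qed.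

Lemma hh_sq n (M : 'M[R]_n) c d : M *m M = d *: M -> c * d = 2 ->
  (1%:M - c *: M) *m (1%:M - c *: M) = 1%:M.
Proof.
move=> MM hc; rewrite mulmxBl !mulmxBr !mul1mx mulmx1 -!scalemxAl -!scalemxAr MM !scalerA.
rewrite -mulrA hc; apply/matrixP => i j; rewrite !mxE; ring.
Qed.

Lemma householder n (u : 'cV[R]_n.+1) : dot u u = 1 ->
  exists O : 'M[R]_n.+1, O^T *m O = 1%:M /\ O *m delta_mx 0 0 = u.
Proof.
move=> u1; set e : 'cV[R]_n.+1 := delta_mx 0 0.
have [->|ne] := eqVneq u e; first by exists 1%:M; rewrite trmx1 !mul1mx.
set w := u - e.
have nw : w != 0 by rewrite /w subr_eq0.
have ee : dot e e = 1 by rewrite /e dot_e mxE.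
have dwe : dot w e = u 0 0 - 1 by rewrite /w dotDl dotNl /e !dot_e mxE.
have dww : dot w w = 2 - 2 * u 0 0.
  rewrite /w dotDl !dotDr !dotNl !dotNr opprK u1 ee /e dot_e (dotC (delta_mx 0 0) u) dot_e; lra.
have wp := dot_gt0 nw.
set c := 2 / dot w w.
have hc : c * dot w w = 2 by rewrite /c divfK // gt_eqF.
set M := w *m w^T.
have MM : M *m M = dot w w *: M.
  by rewrite /M mulmxA -[w *m w^T *m w]mulmxA tt11 mul_mx_scalar -scalemxAl.
have sO : (1%:M - c *: M)^T = 1%:M - c *: M.
  by rewrite linearB /= linearZ /= trmx1 /M trmx_mul trmxK.
exists (1%:M - c *: M); split.
  by rewrite sO; apply: hh_sq MM hc.
rewrite mulmxBl mul1mx -scalemxAl /M -mulmxA tt11 dwe mul_mx_scalar scalerA.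
have -> : c * (u 0 0 - 1) = -1.
  rewrite /c dww; field.
  have : 2 - 2 * u 0 0 != 0 by rewrite -dww gt_eqF.
  apply: contra => /eqP h; apply/eqP; lra.
by rewrite scaleN1r opprK /w addrC subrK.
Qed.

Lemma spectral n (G : 'M[R]_n) : G^T = G ->
  exists O : 'M[R]_n, O^T *m O = 1%:M /\ is_diag_mx (O^T *m G *m O).
Proof.
elim: n G => [|n IH] G sG.
  exists 1%:M; split; first by rewrite trmx1 mul1mx.
  by apply/is_diag_mxP => -[].
have [u [l [u1 hu]]] := real_eigvec sG.
have [O1 [o1 he]] := householder u1.
set B := O1^T *m G *m O1.
have sB : B^T = B by rewrite /B !trmx_mul trmxK sG mulmxA.
have Be : B *m (delta_mx 0 0 : 'cV[R]_n.+1) = l *: delta_mx 0 0.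
  by rewrite /B -!mulmxA he hu -scalemxAr -he mulmxA o1 mul1mx.
have Bi0 : forall i, B i 0 = l * (i == 0)%:R.
  move=> i; move/matrixP: Be => /(_ i 0); rewrite -colE !mxE eqxx andbT //.
have BE : O1^T *m G *m O1 = B by [].
clearbody B.
pose B' : 'M[R]_(1 + n) := B.
set G' := drsubmx B'.
have sG' : G'^T = G' by rewrite /G' trmx_drsub /B' sB.
have [O' [o' dO']] := IH G' sG'.
have Bblk : B' = block_mx (ulsubmx B') 0 0 G'.
  rewrite -{1}(submxK B'); congr block_mx; apply/matrixP => i j; rewrite !mxE.
    rewrite /B' -[B](trmxK) sB mxE.
    have -> : lshift n i = 0 :> 'I_(1 + n) by apply/val_inj; rewrite /= ord1.
    by rewrite Bi0 mulr0.
  have -> : lshift n j = 0 :> 'I_(1 + n) by apply/val_inj; rewrite /= ord1.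
  by rewrite /B' Bi0 mulr0.
pose K : 'M[R]_(1 + n) := block_mx 1%:M 0 0 O'.
have KK : K^T *m K = 1%:M.
  rewrite /K tr_block_mx mulmx_block !trmx0 trmx1 !mulmx0 !mul0mx !mul1mx ?mulmx1.
  by rewrite !addr0 !add0r o' -scalar_mx_block.
exists (O1 *m K); split.
  by rewrite trmx_mul mulmxA -[K^T *m O1^T *m O1]mulmxA o1 mulmx1 KK.
have -> : (O1 *m K)^T *m G *m (O1 *m K) = K^T *m B' *m K.
  by rewrite /B' -BE trmx_mul !mulmxA.
rewrite Bblk /K tr_block_mx mulmx_block !trmx0 trmx1 !mulmx0 !mul0mx !mul1mx ?mulmx1.
rewrite !addr0 !add0r mulmx_block !mulmx0 !mul0mx !addr0 !add0r ?mulmx1.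
suff : @is_diag_mx _ (1 + n) (1 + n) (block_mx (ulsubmx B') 0 0 (O'^T *m G' *m O')) by [].
rewrite is_diag_block_mx // !eqxx /= dO' andbT.
exact: mx11_is_diag.
Qed.

End Spec2.

Section Polar.
Variable R : realType.

Lemma entry_dot n (M : 'M[R]_n) i j : dot (delta_mx i 0) (M *m delta_mx j 0) = M i j.
Proof. by rewrite /dot trmx_delta -colE -rowE !mxE. Qed.

Definition fd n (O : 'M[R]_n) (a : 'I_n -> R) := O *m diag_mx (\row_j a j) *m O^T.

Lemma fdM n (O : 'M[R]_n) a b : O^T *m O = 1%:M ->
  fd O a *m fd O b = fd O (fun j => a j * b j).
Proof.
move=> o; rewrite /fd !mulmxA -[_ *m O^T *m O]mulmxA o mulmx1.
rewrite -[_ *m diag_mx _ *m diag_mx _]mulmxA mulmx_diag; congr (_ *m _ *m _).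
by congr diag_mx; apply/rowP => j; rewrite !mxE.
Qed.

Lemma fd_ext n (O : 'M[R]_n) a b : (forall j, a j = b j) -> fd O a = fd O b.
Proof. by move=> h; rewrite /fd; congr (_ *m diag_mx _ *m _); apply/rowP => j; rewrite !mxE h. Qed.

Lemma fd1 n (O : 'M[R]_n) : O^T *m O = 1%:M -> fd O (fun=> 1) = 1%:M.
Proof.
move=> o; rewrite /fd.
have -> : diag_mx (\row_j (1 : R)) = 1%:M :> 'M[R]_n.
  by apply/matrixP => i j; rewrite !mxE.
by rewrite mulmx1 (mulmx1C o).
Qed.

Lemma fd_tr n (O : 'M[R]_n) a : (fd O a)^T = fd O a.
Proof. by rewrite /fd !trmx_mul trmxK tr_diag_mx mulmxA. Qed.

Lemma polar m (S : 'M[R]_m) s : 0 < s -> (forall x, s * vnorm x <= vnorm (S *m x)) ->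
  exists W : 'M[R]_m, [/\ W^T *m W = 1%:M, W *m W^T = 1%:M, (W^T *m S)^T = W^T *m S &
    forall x, s * dot x x <= dot x (W^T *m S *m x)].
Proof.
move=> s0 hS.
have sG : (S^T *m S)^T = S^T *m S by rewrite trmx_mul trmxK.
have [O [o dg]] := spectral sG.
have oo := mulmx1C o.
set dd := fun j => (O^T *m (S^T *m S) *m O) j j.
have GE : S^T *m S = fd O dd.
  have /diag_mxP [d hd] := dg.
  have -> : fd O dd = O *m (O^T *m (S^T *m S) *m O) *m O^T.
    rewrite /fd; congr (_ *m _ *m _); rewrite hd; congr diag_mx.
    by apply/rowP => j; rewrite /dd hd !mxE eqxx mulr1n.
  by rewrite !mulmxA oo mul1mx -mulmxA oo mulmx1.
have ddge : forall j, s ^+ 2 <= dd j.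
  move=> j; rewrite /dd -entry_dot.
  have -> : dot (delta_mx j 0) ((O^T *m (S^T *m S) *m O) *m delta_mx j 0)
    = dot (S *m (O *m delta_mx j 0)) (S *m (O *m delta_mx j 0)).
    by rewrite dot_mull dot_mull !mulmxA.
  rewrite -vnorm_sq.
  have e1 : dot (delta_mx j 0 : 'cV[R]_m) (delta_mx j 0) = 1.
    by rewrite -[X in dot _ X]mul1mx entry_dot mxE eqxx.
  have := hS (O *m delta_mx j 0); rewrite orth_vnorm // vnormE e1 sqrtr1 mulr1.
  move=> h; have := vnorm_ge0 (S *m (O *m delta_mx j 0)); nra.
have ddp : forall j, 0 < dd j by move=> j; apply: lt_le_trans (ddge j); rewrite exprn_gt0.
set r := fun j => Num.sqrt (dd j).
have rp : forall j, 0 < r j by move=> j; rewrite /r sqrtr_gt0.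
have rs : forall j, s <= r j.
  by move=> j; rewrite /r -(ger0_norm (ltW s0)) -sqrtr_sqr ler_sqrt ?ddge // ltW.
have rr : forall j, r j * r j = dd j by move=> j; rewrite -expr2 sqr_sqrtr ?ltW.
set ri := fun j => (r j)^-1.
exists (S *m fd O ri); split.
- rewrite trmx_mul fd_tr -mulmxA [S^T *m _]mulmxA GE !fdM //.
  rewrite -(fd1 o); apply: fd_ext => j; rewrite /ri -rr.
  by field; rewrite gt_eqF.
- apply: mulmx1C; rewrite trmx_mul fd_tr -mulmxA [S^T *m _]mulmxA GE !fdM //.
  rewrite -(fd1 o); apply: fd_ext => j; rewrite /ri -rr.
  by field; rewrite gt_eqF.
- have -> : (S *m fd O ri)^T *m S = fd O r.
    rewrite trmx_mul fd_tr -mulmxA GE fdM //; apply: fd_ext => j.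
    by rewrite /ri -rr mulrA mulVf ?mul1r // gt_eqF.
  exact: fd_tr.
- have -> : (S *m fd O ri)^T *m S = fd O r.
    rewrite trmx_mul fd_tr -mulmxA GE fdM //; apply: fd_ext => j.
    by rewrite /ri -rr mulrA mulVf ?mul1r // gt_eqF.
  move=> x; rewrite /fd -!mulmxA.
  have -> : dot x (O *m (diag_mx (\row_j r j) *m (O^T *m x)))
    = dot (O^T *m x) (diag_mx (\row_j r j) *m (O^T *m x)) by rewrite dot_mull trmxK.
  have -> : dot x x = dot (O^T *m x) (O^T *m x) by rewrite dot_mull trmxK mulmxA oo mul1mx.
  rewrite !dotE mulr_sumr; apply: ler_sum => i _.
  rewrite mul_diag_mx !mxE.
  set y := \sum_j _; have := rs i; have := sqr_ge0 y; rewrite expr2; nra.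
Qed.

End Polar.

Section Span.
Variable R : realType.

Definition spanl n (S : set 'cV[R]_n) (x : 'cV[R]_n) : Prop :=
  exists l : seq (R * 'cV[R]_n), (forall p, p \in l -> S p.2) /\ x = \sum_(p <- l) p.1 *: p.2.

Lemma in_span_spanl n (S : set 'cV[R]_n) x : in_span S x -> spanl S x.
Proof.
move=> [s [c [hs ->]]].
exists [seq (c`_i, s`_i) | i <- iota 0 (size s)]; split.
  move=> p /mapP [j]; rewrite mem_iota add0n => /andP [_ hj] -> /=.
  exact: (hs _ (mem_nth 0 hj)).
symmetry; rewrite big_map -(subn0 (size s)) -/(index_iota 0 (size s)) big_mkord subn0 //.
Qed.

Lemma spanl_in_span n (S : set 'cV[R]_n) x : spanl S x -> in_span S x.
Proof.
move=> [l [hl ->]]; exists (map snd l), (map fst l); split.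
  by move=> v /mapP [p hp ->]; apply: hl.
rewrite (big_nth (0, 0)) size_map big_mkord; apply: eq_bigr => i _.
by rewrite !(nth_map (0, 0)).
Qed.

Lemma spanl0 n (S : set 'cV[R]_n) : spanl S 0.
Proof. by exists [::]; rewrite big_nil. Qed.

Lemma spanlD n (S : set 'cV[R]_n) x y : spanl S x -> spanl S y -> spanl S (x + y).
Proof.
move=> [l1 [h1 ->]] [l2 [h2 ->]]; exists (l1 ++ l2); split; last by rewrite big_cat.
by move=> p; rewrite mem_cat => /orP[/h1|/h2].
Qed.

Lemma spanlZ n (S : set 'cV[R]_n) a x : spanl S x -> spanl S (a *: x).
Proof.
move=> [l [h ->]]; exists [seq (a * p.1, p.2) | p <- l]; split.
  by move=> p hp; case/mapP: hp => q hq ->; exact: (h q hq).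
by symmetry; rewrite big_map scaler_sumr; apply: eq_bigr => p _; rewrite /= scalerA.
Qed.

Lemma spanl_gen n (S : set 'cV[R]_n) x : S x -> spanl S x.
Proof.
move=> hx; exists [:: (1, x)]; split; first by move=> p; rewrite inE => /eqP ->.
by rewrite big_seq1 scale1r.
Qed.

Lemma spanl_lin n (S : set 'cV[R]_n) (A : 'M[R]_n) x :
  (forall g, S g -> spanl S (A *m g)) -> spanl S x -> spanl S (A *m x).
Proof.
move=> hg [l [h ->]]; rewrite mulmx_sumr big_seq.
apply: (big_ind (spanl S) (spanl0 S)); first by move=> u v hu hv; apply: spanlD.
by move=> p hp; rewrite -scalemxAr; apply: spanlZ; apply: hg; apply: h.
Qed.

End Span.

Section Misc.
Variable R : realType.

Lemma eig_span_inv n (A : 'M[R]_n) lam (I : pred 'I_n) x :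
  eig_real_span A lam I x -> eig_real_span A lam I (A *m x).
Proof.
move=> /in_span_spanl hx; apply: spanl_in_span; apply: spanl_lin hx => g [i [v [hI nv hv hg]]].
have hre : A *m Re_mx v = complex.Re (lam i) *: Re_mx v - complex.Im (lam i) *: Im_mx v.
  by rewrite -Re_mxM hv Re_mxZ.
have him : A *m Im_mx v = complex.Im (lam i) *: Re_mx v + complex.Re (lam i) *: Im_mx v.
  by rewrite -Im_mxM hv Im_mxZ.
have gr : spanl [set w | exists (i : 'I_n) (v : 'cV_n),
             [/\ I i, v != 0, cplx_mx A *m v = lam i *: v
               & (w = Re_mx v \/ w = Im_mx v)]] (Re_mx v).
  by apply: spanl_gen; exists i, v; split => //; left.
have gi : spanl [set w | exists (i : 'I_n) (v : 'cV_n),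
             [/\ I i, v != 0, cplx_mx A *m v = lam i *: v
               & (w = Re_mx v \/ w = Im_mx v)]] (Im_mx v).
  by apply: spanl_gen; exists i, v; split => //; right.
case: hg => ->; [rewrite hre | rewrite him]; apply: spanlD; try apply: spanlZ => //.
by rewrite -scaleNr; apply: spanlZ.
Qed.

Lemma mx_eq_vec p q (M N : 'M[R]_(p, q)) : (forall x : 'cV[R]_q, M *m x = N *m x) -> M = N.
Proof.
move=> h; apply/matrixP => i j; have := h (delta_mx j 0); rewrite -!colE.
by move/matrixP => /(_ i 0); rewrite !mxE.
Qed.

Lemma inj_unit n (M : 'M[R]_n) : (forall x : 'cV[R]_n, M *m x = 0 -> x = 0) -> M \in unitmx.
Proof.
move=> h; rewrite -unitmx_tr -row_free_unit -kermx_eq0; apply/eqP/row_matrixP => i.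
rewrite row0; apply: trmx_inj; rewrite trmx0; apply: h.
have : row i (kermx M^T) *m M^T = 0 by rewrite -row_mul mulmx_ker row0.
by move/(congr1 trmx); rewrite trmx_mul trmxK trmx0.
Qed.

Lemma sq_le (a b : R) : 0 <= a -> 0 <= b -> a ^+ 2 <= b ^+ 2 -> a <= b.
Proof. move=> a0 b0 h; rewrite leNgt; apply/negP => ab; nra. Qed.

Lemma dot_split p q (P1 : 'M[R]_(p, q)) r (P2 : 'M[R]_(p, r)) z :
  P1 *m P1^T + P2 *m P2^T = 1%:M ->
  dot z z = dot (P1^T *m z) (P1^T *m z) + dot (P2^T *m z) (P2^T *m z).
Proof.
move=> h; rewrite !dot_mull !trmxK !mulmxA -dotDr -mulmxDl h mul1mx //.
Qed.

End Misc.

Lemma sq_mono {R : realType} {a b : R} : 0 <= a -> a <= b -> a ^+ 2 <= b ^+ 2.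
Proof. move=> a0 ab; nra. Qed.

Unset Implicit Arguments.
Set Strict Implicit.
Set Printing Implicit Defensive.

Theorem mainTheorem5 (R : realType) (k m : nat) (A : 'M[R]_(k + m))
  (lam : 'I_(k + m) -> complex.complex R) (xi : R) (P1 : 'M[R]_(k + m, k)) :
  spectral_assumption k A lam ->
  orthonormal_cols P1 -> col_spans P1 (E_u k A lam) ->
  0 < xi -> xi < 1 ->
  xi_close m xi (orth_compl (E_u k A lam)) (E_s k A lam) ->
  exists P2 Q2 : 'M[R]_(k + m, m),
    let P := row_mx P1 P2 in
    let M := P^T *m A *m P in
    let Delta := ursubmx M in
    let Q := row_mx P1 Q2 in
    let R1 := usubmx (invmx Q) : 'M[R]_(k, k + m) in
    let R2 := dsubmx (invmx Q) : 'M[R]_(m, k + m) in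
    let N2 := drsubmx (invmx Q *m A *m Q) in
    [/\ orthonormal_cols P2, col_spans P2 (orth_compl (E_u k A lam)),
        orthonormal_cols Q2, col_spans Q2 (E_s k A lam) & Q \in unitmx] /\
    [/\ 1 - xi <= sigma_min (P2^T *m Q2),
        opnorm (P1^T *m Q2) <= Num.sqrt (2 * xi) &
        opnorm (P2 - Q2) <= Num.sqrt (2 * xi)] /\
    (opnorm R2 <= 1 / (1 - xi) /\ opnorm N2 <= 1 / (1 - xi) * opnorm A) /\
    (opnorm (P1^T - R1) <= Num.sqrt (2 * xi) / (1 - xi) /\
     opnorm R1 <= 1 + Num.sqrt (2 * xi) / (1 - xi)) /\
    opnorm Delta <= (2 - xi) / (1 - xi) * Num.sqrt (2 * xi) * opnorm A.
Proof.
move=> _ o1 c1 xi0 xi1 [P2 [Q2 [o2 c2 oq cq hs]]].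
rewrite /orthonormal_cols in o1 o2 oq.
set S := P2^T *m Q2 in hs.
set sg := sigma_min S in hs.
have sgp : 0 < sg by lra.
have hS : forall x, sg * vnorm x <= vnorm (S *m x) := sigma_min_lb S.
have [W [WW WWt Hsym Hpos]] := polar sgp hS.
set H := W^T *m S in Hsym Hpos.
set P2' := P2 *m W.
have dPP : forall y z, dot (P1 *m y) (P2 *m z) = 0.
  move=> y z.
  have hu : orth_compl (E_u k A lam) (P2 *m z) by apply/(c2 _).1; exists z.
  have he : E_u k A lam (P1 *m y) by apply/(c1 _).1; exists y.
  by have := hu _ he; rewrite /dot => ->; rewrite mxE.
have P12 : P1^T *m P2 = 0.
  apply: mx_eq_vec => x; rewrite mul0mx -mulmxA; apply: dot_eq0.
  by rewrite [LHS]dot_mull trmxK dotC dPP.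
have P12' : P1^T *m P2' = 0 by rewrite /P2' mulmxA P12 mul0mx.
have P21 : P2'^T *m P1 = 0 by rewrite -[P2'^T *m P1]trmxK trmx_mul trmxK P12' trmx0.
have o2' : P2'^T *m P2' = 1%:M.
  by rewrite /P2' trmx_mul mulmxA -(mulmxA W^T) o2 mulmx1 WW.
have Pfull : P1 *m P1^T + P2' *m P2'^T = 1%:M.
  have PP : (row_mx P1 P2')^T *m row_mx P1 P2' = 1%:M.
    by rewrite tr_row_mx mul_col_row o1 o2' P12' P21 -scalar_mx_block.
  by have := mulmx1C PP; rewrite tr_row_mx mul_row_col.
have HE : P2'^T *m Q2 = H by rewrite /P2' /H /S trmx_mul mulmxA.
have vH : forall x, vnorm (H *m x) = vnorm (S *m x).
  by move=> x; rewrite /H -mulmxA orth_vnorm // trmxK WWt.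
have hH : forall x, sg * vnorm x <= vnorm (H *m x) by move=> x; rewrite vH.
have Qu : row_mx P1 Q2 \in unitmx.
  apply: inj_unit => y hy; rewrite -(vsubmxK y) mul_row_col in hy.
  have hb : H *m dsubmx y = 0.
    have := congr1 (mulmx P2'^T) hy.
    by rewrite mulmx0 mulmxDr !mulmxA P21 mul0mx add0r HE.
  have b0 : dsubmx y = 0.
    apply: vnorm_eq0; have := hH (dsubmx y); rewrite hb vnorm0 => h.
    rewrite (pmulr_rle0 _ sgp) in h; apply/eqP; rewrite eq_le h vnorm_ge0 //.
  rewrite b0 mulmx0 addr0 in hy.
  have a0 : usubmx y = 0 by rewrite -[usubmx y]mul1mx -o1 -mulmxA hy mulmx0.
  by rewrite -(vsubmxK y) a0 b0 col_mx0.
exists P2', Q2.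
move=> P M Delta Q R1 R2 N2.
have QIE : invmx Q = col_mx R1 R2 by rewrite /R1 /R2 vsubmxK.
have QIQ : invmx Q *m Q = 1%:M := mulVmx Qu.
have QQI : Q *m invmx Q = 1%:M := mulmxV Qu.
move: QIQ; rewrite QIE /Q mul_col_row (scalar_mx_block k m) => /eq_block_mx [h11 h12 h21 h22].
move: QQI; rewrite QIE /Q mul_row_col => hsum.
have QR : Q2 *m R2 = 1%:M - P1 *m R1 by rewrite -hsum addrAC subrr add0r.
have hR2H : forall x : 'cV[R]_(k + m), H *m (R2 *m x) = P2'^T *m x.
  move=> x; have -> : H *m (R2 *m x) = P2'^T *m (Q2 *m R2 *m x) by rewrite -HE !mulmxA.
  by rewrite QR mulmxBl mul1mx mulmxBr !mulmxA P21 !mul0mx subr0.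
have xi1' : 0 < 1 - xi by lra.
have sgx : 1 - xi < sg by [].
have bR2 : bnd R2 (1 / (1 - xi)).
  move=> x; have := hH (R2 *m x); rewrite hR2H.
  have := bnd_orthT o2' x; rewrite mul1r => h1 h2.
  have h3 : (1 - xi) * vnorm (R2 *m x) <= vnorm x.
    have := vnorm_ge0 (R2 *m x); nra.
  by rewrite div1r ler_pdivlMl.
have s2 : 0 <= Num.sqrt (2 * xi) by apply: sqrtr_ge0.
have s2sq : Num.sqrt (2 * xi) ^+ 2 = 2 * xi by rewrite sqr_sqrtr //; lra.
have bPQ : bnd (P1^T *m Q2) (Num.sqrt (2 * xi)).
  move=> y; apply: sq_le; [exact: vnorm_ge0 | by rewrite mulr_ge0 ?vnorm_ge0 |].
  rewrite exprMn s2sq !vnorm_sq.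
  have ds := dot_split (Q2 *m y) Pfull.
  rewrite !mulmxA HE in ds.
  have qy : dot (Q2 *m y) (Q2 *m y) = dot y y by rewrite -!vnorm_sq orth_vnorm.
  rewrite qy in ds.
  have hy := sq_mono (mulr_ge0 (ltW sgp) (vnorm_ge0 y)) (hH y).
  rewrite exprMn !vnorm_sq in hy.
  have yy := dot_ge0 y.
  have f1 : (1 - xi) ^+ 2 * dot y y <= sg ^+ 2 * dot y y.
    by rewrite ler_wpM2r // sq_mono //; [lra | apply: ltW].
  have f2 : 0 <= xi ^+ 2 * dot y y by rewrite mulr_ge0 // sqr_ge0.
  have e1 : (1 - xi) ^+ 2 * dot y y = dot y y - 2 * xi * dot y y + xi ^+ 2 * dot y y by ring.
  lra.
have bPQd : bnd (P2' - Q2) (Num.sqrt (2 * xi)).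
  move=> y; apply: sq_le; [exact: vnorm_ge0 | by rewrite mulr_ge0 ?vnorm_ge0 |].
  rewrite exprMn s2sq !vnorm_sq mulmxBl dotDl !dotDr !dotNl !dotNr opprK.
  have a1 : dot (P2' *m y) (P2' *m y) = dot y y by rewrite -!vnorm_sq orth_vnorm.
  have a2 : dot (Q2 *m y) (Q2 *m y) = dot y y by rewrite -!vnorm_sq orth_vnorm.
  have a3 : dot (P2' *m y) (Q2 *m y) = dot y (H *m y) by rewrite dot_mull mulmxA HE.
  have a4 := Hpos y.
  rewrite (dotC (Q2 *m y)) a1 a2 a3.
  have yy := dot_ge0 y.
  have f1 : (1 - xi) * dot y y <= sg * dot y y by rewrite ler_wpM2r // ltW.
  lra.
have sgE : sigma_min (P2'^T *m Q2) = sg.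
  rewrite HE /sigma_min /sg /sigma_min; congr inf.
  by apply/seteqP; split => r [x hx <-]; exists x => //; rewrite vH.
have N2E : N2 = R2 *m A *m Q2.
  by rewrite /N2 QIE /Q mul_col_mx mul_col_row block_mxKdr.
have nA := opnorm_ge0 A.
have ixi : 0 <= 1 / (1 - xi) by rewrite div1r invr_ge0 ltW.
have bN2 : bnd N2 (1 / (1 - xi) * opnorm A).
  rewrite N2E -[_ * opnorm A]mulr1; apply: bnd_mul; first by rewrite mulr_ge0.
    exact: bnd_mul ixi bR2 (bnd_opnorm A).
  exact: bnd_orth.
have hR1 : P1^T - R1 = P1^T *m Q2 *m R2.
  have h := congr1 (mulmx P1^T) hsum.
  rewrite mulmxDr !mulmxA o1 mul1mx mulmx1 in h.
  by rewrite -{1}h addrAC subrr add0r.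
have bR1d : bnd (P1^T - R1) (Num.sqrt (2 * xi) / (1 - xi)).
  rewrite hR1 -[Num.sqrt _ / _]mul1r mulrCA mul1r -div1r; exact: bnd_mul s2 bPQ bR2.
have bR1 : bnd R1 (1 + Num.sqrt (2 * xi) / (1 - xi)).
  have := bnd_sub (bnd_orthT o1) bR1d.
  by rewrite opprB addrC subrK.
have AQ : A *m Q2 = Q2 *m N2.
  have hQ : Q2 *m Q2^T *m (A *m Q2) = A *m Q2.
    apply: mx_eq_vec => x; rewrite -!mulmxA.
    have : E_s k A lam (A *m (Q2 *m x)).
      by apply: eig_span_inv; apply/(cq _).1; exists x.
    move=> /(cq _).2 [y hy]; rewrite hy.
    by rewrite (mulmxA Q2^T) oq mul1mx.
  have N2Q : N2 = Q2^T *m A *m Q2.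
    by rewrite N2E -(mulmxA R2) -hQ !mulmxA h22 mul1mx.
  by rewrite N2Q -{1}hQ !mulmxA.
have DE : Delta = P1^T *m Q2 *m N2 + P1^T *m A *m (P2' - Q2).
  rewrite /Delta /M /P tr_row_mx mul_col_mx mul_col_row block_mxKur.
  by rewrite -(mulmxA P1^T Q2 N2) -AQ mulmxA mulmxBr addrC subrK.
have bD : bnd Delta ((2 - xi) / (1 - xi) * Num.sqrt (2 * xi) * opnorm A).
  have e : (2 - xi) / (1 - xi) * Num.sqrt (2 * xi) * opnorm A =
      Num.sqrt (2 * xi) * (1 / (1 - xi) * opnorm A) + (1 * opnorm A) * Num.sqrt (2 * xi).
    by field; rewrite gt_eqF.
  rewrite e DE; apply: bnd_add.
    exact: bnd_mul s2 bPQ bN2.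
  apply: bnd_mul; first by rewrite mul1r.
    exact: bnd_mul ler01 (bnd_orthT o1) (bnd_opnorm A).
  exact: bPQd.
have c2' : col_spans P2' (orth_compl (E_u k A lam)).
  move=> x; rewrite -(c2 x); split => -[y ->].
    by exists (W *m y); rewrite /P2' mulmxA.
  by exists (W^T *m y); rewrite /P2' -mulmxA (mulmxA W) WWt mul1mx.
split; first by split.
split; first split.
- by rewrite sgE ltW.
- exact: opnorm_le s2 bPQ.
- exact: opnorm_le s2 bPQd.
split; first split.
- exact: opnorm_le ixi bR2.
- by apply: opnorm_le bN2; rewrite mulr_ge0.
split; first split.
- by apply: opnorm_le bR1d; rewrite divr_ge0 // ltW.
- by apply: opnorm_le bR1; rewrite addr_ge0 // divr_ge0 // ltW.
apply: opnorm_le bD; apply: mulr_ge0 => //; apply: mulr_ge0 => //; apply: divr_ge0; lra.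
Qed.
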